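(* Suppose we have $2$ agents with additive, normalized valuations, provided with predictions of accuracy $\eta<1-\frac{1-a}{\min\{6a,4\}}$ for some given $a\in(\frac12,1]$, that is, the allowed error between the predictions and the true valuations is $1-\eta>\frac{1-a}{\min\{6a,4\}}$. Then there is no online algorithm that guarantees an $a$-EFX allocation for all instances whose errors are at most $1-\eta$, even when $T'=T=4$ and the predictions and the true valuations are $4$-value functions.
   Context: Online fair division with predictions: agents $N=[n]$; goods $g_1,\dots,g_T$ arrive one per time step. Each agent $i$ has a true additive normalized valuation $v_i$ ($v_i(g_t)\ge0$, $\sum_{t\in[T]}v_i(g_t)=1$, $v_i(S)=\sum_{g\in S}v_i(g)$) and, before any arrival, the algorithm receives a prediction $p_i=(p_i(g_1),\dots,p_i(g_{T'}))$ for each agent (an additive normalized valuation over $T'$ predicted goods) together with the accuracy level. Error $d_i=\frac12\sum_{t=1}^{\max\{T,T'\}}|p_i(g_t)-v_i(g_t)|$ (missing entries set to $0$), accuracy $\eta_i=1-d_i$; accuracy $\eta$ means $d_i\le 1-\eta$ for all $i$. At time $t$ the true values $v_i(g_t)$ are revealed and $g_t$ must be irrevocably allocated. For $S\ne\emptyset$ and valuation $f$, $\bar S^f=S\setminus\{g\}$ with $g\in\arg\max_{g'\in S}f(S\setminus\{g'\})$, $\bar\emptyset^f=\emptyset$. An allocation is $a$-EFX if $v_i(A_i)\ge a\cdot v_i(\bar{A_j}^{v_i})$ for all $i,j$. A function is $k$-value if it takes at most $k$ distinct values. *)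

(* Defs.v *)
From mathcomp Require Import all_boot all_order all_algebra.
Set Implicit Arguments. Unset Strict Implicit. Unset Printing Implicit Defensive.
Import Order.TTheory GRing.Theory Num.Theory.
Local Open Scope ring_scope.

Definition val (R : realFieldType) (G : finType) (f : G -> R) (S : {set G}) : R :=
  \sum_(g in S) f g.

Definition normalized (R : realFieldType) (G : finType) (f : G -> R) : Prop :=
  (forall g, 0 <= f g) /\ \sum_(g : G) f g = 1.

Definition k_value (R : realFieldType) (G : finType) (k : nat) (f : G -> R) : Prop :=
  (size (undup [seq f g | g <- enum G]) <= k)%N.

(* Error d = 1/2 * sum_t |p(g_t) - v(g_t)| (same goods for T = T'). *)
Definition error (R : realFieldType) (G : finType) (p v : G -> R) : R :=
  2^-1 * \sum_(g : G) `|p g - v g|.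

Definition sbar (R : realFieldType) (G : finType) (f : G -> R) (S : {set G}) : {set G} :=
  match [pick g in S] with
  | Some g0 => S :\ [arg max_(g > g0 in S) val f (S :\ g)]%O
  | None => set0
  end.

Definition aEFX (R : realFieldType) (N G : finType) (a : R)
    (v : N -> G -> R) (A : N -> {set G}) : Prop :=
  forall i j, val (v i) (A i) >= a * val (v i) (sbar (v i) (A j)).

(* Setting of the theorem: 2 agents, T = T' = 4 goods g_1..g_4 (indices 0..3). *)
Notation agent := 'I_2.
Notation good := 'I_4.

(* A deterministic online algorithm (for the fixed accuracy level eta):
   alg p t v = agent receiving good t, given predictions p and the true
   valuations v; it must be causal, i.e. only depend on v(g_s) for s <= t. *)
Definition online_alg (R : realFieldType) :=
  (agent -> good -> R) -> good -> (agent -> good -> R) -> agent.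

Definition causal (R : realFieldType) (alg : online_alg R) : Prop :=
  forall p (t : good) (v v' : agent -> good -> R), (forall (i : agent) (g : good), (g <= t)%N -> v i g = v' i g) ->
    alg p t v = alg p t v'.

Definition alloc (R : realFieldType) (alg : online_alg R) p v (i : agent) : {set good} :=
  [set g | alg p g v == i].

Definition admissible (R : realFieldType) (eta : R) (p v : agent -> good -> R) : Prop :=
  forall i, [/\ normalized (p i), normalized (v i), k_value 4 (p i), k_value 4 (v i)
              & error (p i) (v i) <= 1 - eta].

(* Main.v *)
Require Import Defs.
From mathcomp Require Import all_boot all_order all_algebra.
From mathcomp Require Import ring lra.
Set Implicit Arguments. Unset Strict Implicit. Unset Printing Implicit Defensive.
Import Order.TTheory GRing.Theory Num.Theory.
Local Open Scope ring_scope.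

Lemma sbar_ge (R : realFieldType) (G : finType) (f : G -> R) (S : {set G}) g :
  g \in S -> Defs.val f (S :\ g) <= Defs.val f (sbar f S).
Proof.
move=> gS; rewrite /sbar; case: pickP => [g0 g0S|]; last by move/(_ g); rewrite gS.
case: (arg_maxP (fun g => Defs.val f (S :\ g)) g0S) => g1 _ Hm.
exact: Hm.
Qed.

Definition g0 : good := @Ordinal 4 0 isT.
Definition g1 : good := @Ordinal 4 1 isT.
Definition g2 : good := @Ordinal 4 2 isT.
Definition g3 : good := @Ordinal 4 3 isT.
Definition a0 : agent := @Ordinal 2 0 isT.
Definition a1 : agent := @Ordinal 2 1 isT.

Definition fa (c0 c1 c2 c3 : agent) (g : good) : agent :=
  match nat_of_ord g with 0 => c0 | 1 => c1 | 2 => c2 | _ => c3 end.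

Lemma agentP (c : agent) : c = a0 \/ c = a1.
Proof. case: c => [[|[|k]] Hk]; [left|right|by []]; exact: val_inj. Qed.

Lemma reduction (R : realFieldType) (a eta : R) (p : agent -> good -> R)
  (V : agent -> agent -> agent -> good -> R) :
  (forall c1 c2 c1' c2' i, V c1 c2 i g0 = V c1' c2' i g0) ->
  (forall c1 c2 c2' i (g : good), (g <= 1)%N -> V c1 c2 i g = V c1 c2' i g) ->
  (forall c1 c2, admissible eta p (V c1 c2)) ->
  (forall c1 c2 c3 c4, ~ aEFX a (V c1 c2) (fun i => [set g | fa c1 c2 c3 c4 g == i])) ->
  ~ exists alg : online_alg R,
      causal alg /\
      forall p v : agent -> good -> R,
        admissible eta p v -> aEFX a v (alloc alg p v).
Proof.
move=> E0 E1 Ad F [alg [Hc H]].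
pose c1 := alg p g0 (V a0 a0).
pose c2 := alg p g1 (V c1 a0).
pose v := V c1 c2.
have h0 : alg p g0 v = c1.
  apply: Hc => i g; rewrite leqn0 => /eqP gE.
  have -> : g = g0 by apply: val_inj.
  exact: E0.
have h1 : alg p g1 v = c2.
  apply: Hc => i g Hg; exact: E1.
apply: (F c1 c2 (alg p g2 v) (alg p g3 v)).
have E : forall i, alloc alg p v i = [set g | fa c1 c2 (alg p g2 v) (alg p g3 v) g == i].
  move=> i; apply/setP => g; rewrite !inE /fa.
  case: g => [[|[|[|[|k]]]] Hk] //=.
  - by rewrite -h0; have -> : Ordinal Hk = g0 by apply: val_inj.
  - by rewrite -h1; have -> : Ordinal Hk = g1 by apply: val_inj.
  - by have -> : Ordinal Hk = g2 by apply: val_inj.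
  - by have -> : Ordinal Hk = g3 by apply: val_inj.
move=> i j; have := H p v (Ad c1 c2) i j; by rewrite !E.
Qed.

Lemma sum4 (R : realFieldType) (F : good -> R) :
  \sum_(g : good) F g = F g0 + F g1 + F g2 + F g3.
Proof.
rewrite !big_ord_recl big_ord0 addr0 !addrA.
by congr (F _ + F _ + F _ + F _); apply: val_inj.
Qed.

Lemma valE (R : realFieldType) (f : good -> R) S :
  Defs.val f S = (if g0 \in S then f g0 else 0) + (if g1 \in S then f g1 else 0)
     + (if g2 \in S then f g2 else 0) + (if g3 \in S then f g3 else 0).
Proof. by rewrite /Defs.val big_mkcond sum4. Qed.

Lemma notEFX (R : realFieldType) (a : R) (v : agent -> good -> R) (A : agent -> {set good}) i j g :
  g \in A j -> 0 <= a -> Defs.val (v i) (A i) < a * Defs.val (v i) (A j :\ g) -> ~ aEFX a v A.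
Proof.
move=> gA a0 lt H; have := H i j.
have := sbar_ge (v i) gA => le.
have : a * Defs.val (v i) (A j :\ g) <= a * Defs.val (v i) (sbar (v i) (A j)) by apply: ler_wpM2l.
move=> h1 h2; have := lt_le_trans lt (le_trans h1 h2); by rewrite ltxx.
Qed.

Lemma keyk (R : realFieldType) (a k x o : R) : 0 < k -> 1 < a * k -> 0 < o -> x * k <= o -> x < a * o.
Proof. move=> hk hak ho hx. nra. Qed.

Lemma keyr (R : realFieldType) (a r x o : R) : r < a -> 0 < o -> x <= r * o -> x < a * o.
Proof. move=> hr ho hx. nra. Qed.

Definition V2 (R : realFieldType) (d : R) (c1 c2 i : agent) (g : good) : R :=
  match nat_of_ord g with
  | 0 => 1/3 - 2 * d
  | 1 => if i == c1 then 1/6 else 1/6 + d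
  | 2 => if i == c1 then 1/6 else if c2 == c1 then 1/6 + d else 1/6 - d
  | _ => if i == c1 then 1/3 + 2 * d else if c2 == c1 then 1/3 else 1/3 + 2 * d
  end.

Lemma test (R : realFieldType) (a d : R) : 1/12 <= d <= 1/6 -> 0 < a -> 1 < a * (1 + 6 * d) ->
  ~ aEFX a (V2 d a0 a1) (fun i => [set g | fa a0 a1 a1 a1 g == i]).
Proof.
move=> hd ha hk.
apply: (@notEFX _ _ _ _ a0 a1 g1); first by rewrite !inE.
  exact: ltW.
rewrite !valE !inE /fa /V2 /=.
apply: (keyk (k := 1 + 6 * d)) => //; try lra.
nra.
Qed.

Ltac absr := repeat match goal with |- context[`|?t|] =>
  let h := fresh in case: (leP 0 t) => h; [rewrite (ger0_norm h) | rewrite (ltr0_norm h)] end.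

Lemma kval (R : realFieldType) (f : good -> R) : k_value 4 f.
Proof. rewrite /k_value; apply: leq_trans (size_undup _) _; by rewrite size_map size_enum_ord. Qed.

Definition P2 (R : realFieldType) (d : R) (i : agent) (g : good) : R :=
  match nat_of_ord g with
  | 0 => 1/3 - 2 * d
  | 1 => 1/6 + d
  | 2 => 1/6
  | _ => 1/3 + d
  end.

Lemma adm2 (R : realFieldType) (eta d : R) c1 c2 : 1/12 <= d <= 1/6 -> d <= 1 - eta ->
  admissible eta (P2 d) (V2 d c1 c2).
Proof.
move=> hd hD i; split; try exact: kval.
- split; first by case => [[|[|[|[|k]]]] Hk] //; rewrite /P2 /=; lra.
  rewrite sum4 /P2 /=; lra.
- split; first by case => [[|[|[|[|k]]]] Hk] //; rewrite /V2 /=; repeat case: ifP => _; lra.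
  rewrite sum4 /V2 /=; repeat case: ifP => _; lra.
- rewrite /error sum4 /V2 /P2 /=; repeat case: ifP => _; absr; lra.
Qed.

Definition V1 (R : realFieldType) (d : R) (c1 c2 i : agent) (g : good) : R :=
  match nat_of_ord g with
  | 0 => 1/6
  | 1 => 1/6
  | 2 => if (c1 == c2) && (i != c1) then 1/4 + d else 1/4 - d
  | _ => if (c1 == c2) && (i != c1) then 5/12 - d else 5/12 + d
  end.

Definition P1 (R : realFieldType) (i : agent) (g : good) : R :=
  match nat_of_ord g with
  | 0 => 1/6
  | 1 => 1/6
  | 2 => 1/4
  | _ => 5/12
  end.

Lemma adm1 (R : realFieldType) (eta d : R) c1 c2 : 0 < d <= 1/12 -> d <= 1 - eta ->
  admissible eta (@P1 R) (V1 d c1 c2).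
Proof.
move=> hd hD i; split; try exact: kval.
- split; first by case => [[|[|[|[|k]]]] Hk] //; rewrite /P1 /=; lra.
  rewrite sum4 /P1 /=; lra.
- split; first by case => [[|[|[|[|k]]]] Hk] //; rewrite /V1 /=; repeat case: ifP => _; lra.
  rewrite sum4 /V1 /=; repeat case: ifP => _; lra.
- rewrite /error sum4 /V1 /P1 /=; repeat case: ifP => _; absr; lra.
Qed.

Lemma fail2 (R : realFieldType) (a d : R) : 1/12 <= d <= 1/6 -> 0 < a -> 1 < a * (1 + 6 * d) ->
  forall c1 c2 c3 c4, ~ aEFX a (V2 d c1 c2) (fun i => [set g | fa c1 c2 c3 c4 g == i]).
Proof.
move=> hd ha hk c1 c2 c3 c4.
Local Ltac fin i j g d := apply: (@notEFX _ _ _ _ i j g); [by rewrite !inE | exact: ltW |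
  rewrite !valE !inE /fa /V2 /=; apply: (keyk (k := 1 + 6 * d)); [lra|lra|lra|nra]].
case: (agentP c1) => ->; case: (agentP c2) => ->; case: (agentP c3) => ->; case: (agentP c4) => ->.
- fin a1 a0 g0 d.
- fin a1 a0 g0 d.
- fin a1 a0 g0 d.
- fin a0 a1 g2 d.
- fin a1 a0 g0 d.
- fin a0 a1 g1 d.
- fin a1 a0 g0 d.
- fin a0 a1 g1 d.
- fin a1 a0 g1 d.
- fin a0 a1 g0 d.
- fin a1 a0 g1 d.
- fin a0 a1 g0 d.
- fin a1 a0 g2 d.
- fin a0 a1 g0 d.
- fin a0 a1 g0 d.
- fin a0 a1 g0 d.
Qed.

Lemma fail1 (R : realFieldType) (a d : R) : 0 < d <= 1/12 -> 0 < a -> 1 - 4 * d < a ->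
  forall c1 c2 c3 c4, ~ aEFX a (V1 d c1 c2) (fun i => [set g | fa c1 c2 c3 c4 g == i]).
Proof.
move=> hd ha hk c1 c2 c3 c4.
Local Ltac fin1 i j g d := apply: (@notEFX _ _ _ _ i j g); [by rewrite !inE | exact: ltW |
  rewrite !valE !inE /fa /V1 /=; apply: (keyr (r := 1 - 4 * d)); [lra|lra|nra]].
case: (agentP c1) => ->; case: (agentP c2) => ->; case: (agentP c3) => ->; case: (agentP c4) => ->.
- fin1 a1 a0 g0 d.
- fin1 a1 a0 g0 d.
- fin1 a1 a0 g0 d.
- fin1 a0 a1 g2 d.
- fin1 a1 a0 g0 d.
- fin1 a0 a1 g1 d.
- fin1 a1 a0 g0 d.
- fin1 a0 a1 g1 d.
- fin1 a1 a0 g1 d.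
- fin1 a0 a1 g0 d.
- fin1 a1 a0 g1 d.
- fin1 a0 a1 g0 d.
- fin1 a1 a0 g2 d.
- fin1 a0 a1 g0 d.
- fin1 a0 a1 g0 d.
- fin1 a0 a1 g0 d.
Qed.

Theorem theorem4p5 (R : realFieldType) (a eta : R) :
  2^-1 < a -> a <= 1 ->
  eta < 1 - (1 - a) / Num.min (6 * a) 4 ->
  ~ exists alg : online_alg R,
      causal alg /\
      forall p v : agent -> good -> R,
        admissible eta p v -> aEFX a v (alloc alg p v).
Proof.
move=> ha1 ha2 heta.
have ha0 : 0 < a by lra.
have E2 : forall d : R, 1/12 <= d <= 1/6 -> d <= 1 - eta -> 1 < a * (1 + 6 * d) -> ~ exists alg : online_alg R,
      causal alg /\ forall p v : agent -> good -> R, admissible eta p v -> aEFX a v (alloc alg p v).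
  move=> d hd hD hk; apply: (@reduction _ a eta (P2 d) (V2 d)).
  - by [].
  - by move=> c1 c2 c2' i; case => [[|[|k]] Hk].
  - by move=> c1 c2; apply: adm2.
  - exact: fail2.
have E1 : forall d : R, 0 < d <= 1/12 -> d <= 1 - eta -> 1 - 4 * d < a -> ~ exists alg : online_alg R,
      causal alg /\ forall p v : agent -> good -> R, admissible eta p v -> aEFX a v (alloc alg p v).
  move=> d hd hD hk; apply: (@reduction _ a eta (@P1 R) (V1 d)).
  - by [].
  - by move=> c1 c2 c2' i; case => [[|[|k]] Hk].
  - by move=> c1 c2; apply: adm1.
  - exact: fail1.
case: (leP a (2/3)) => ha3.
- have hm : Num.min (6 * a) 4 = 6 * a by apply: min_l; lra.
  rewrite hm in heta.
  have h6 : 0 < 6 * a by lra.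
  have hD : 1 - a < (1 - eta) * (6 * a).
    by rewrite -ltr_pdivrMr //; lra.
  case: (leP (1 - eta) (1/6)) => hD6.
  + apply: (E2 (1 - eta)); nra.
  + apply: (E2 (1/6)); lra.
- have hm : Num.min (6 * a) 4 = 4 by apply: min_r; lra.
  rewrite hm in heta.
  case: (leP (1 - eta) (1/12)) => hD6.
  + apply: (E1 (1 - eta)); lra.
  + apply: (E1 (1/12)); lra.
Qed.
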